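(* Every non-commutative BCK-algebra $\mathcal A$ of order $n$ satisfies $\operatorname{cd}(\mathcal A)\le\frac{n^2-2}{n^2}$, and for each $n\ge3$ this bound is attained: the algebra $\mathcal B_n$ defined by $\mathcal B_3=\mathcal{PI}$ and $\mathcal B_n=\mathcal B_{n-1}\sqcup\mathbf 2$ for $n>3$ is a non-commutative BCK-algebra of order $n$ with $\operatorname{cd}(\mathcal B_n)=\frac{n^2-2}{n^2}$. Consequently the equation $x\wedge y=y\wedge x$ has no finite satisfiability gap among BCK-algebras.
   Context: A BCK-algebra is a set $A$ with a binary operation $\cdot$ and a constant $0$ such that for all $x,y,z\in A$: (BCK1) $((x\cdot y)\cdot(x\cdot z))\cdot(z\cdot y)=0$; (BCK2) $(x\cdot(x\cdot y))\cdot y=0$; (BCK3) $x\cdot x=0$; (BCK4) $0\cdot x=0$; (BCK5) $x\cdot y=0$ and $y\cdot x=0$ imply $x=y$. Define $x\wedge y:=y\cdot(y\cdot x)$; the algebra is commutative if $x\wedge y=y\wedge x$ for all $x,y$. For finite $\mathcal A$, $\operatorname{cd}(\mathcal A)=|\{(x,y)\in A^2:x\wedge y=y\wedge x\}|/|A|^2$. $\mathcal{PI}$ is the BCK-algebra on $\{0,1,2\}$ with $1\cdot0=1$, $2\cdot0=2$, $2\cdot1=2$ and all other products $0$. $\mathbf 2$ is a two-element BCK-algebra $\{0,b\}$ with $b\cdot0=b$ and other products $0$, where $b$ is a new element. For BCK-algebras $\mathcal A,\mathcal B$ with $A\cap B=\{0\}$, the BCK-union $\mathcal A\sqcup\mathcal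 B$ has carrier $A\cup B$, with $x\cdot y$ computed in $\mathcal A$ if $x,y\in A$, in $\mathcal B$ if $x,y\in B$, and $x\cdot y=x$ otherwise. An equation has no finite satisfiability gap in a class if for every $\epsilon>0$ some finite member has degree of satisfiability strictly between $1-\epsilon$ and $1$. *)

(* Defs.v *)
From mathcomp Require Import all_boot all_order all_algebra.
Set Implicit Arguments. Unset Strict Implicit. Unset Printing Implicit Defensive.
Import Order.TTheory GRing.Theory Num.Theory.

Definition is_BCK (T : eqType) (op : T -> T -> T) (z : T) : Prop :=
  [/\ (forall x y w, op (op (op x y) (op x w)) (op w y) = z),
      (forall x y, op (op x (op x y)) y = z),
      (forall x, op x x = z),
      (forall x, op z x = z)
    & (forall x y, op x y = z -> op y x = z -> x = y)].

Definition bmeet (T : Type) (op : T -> T -> T) (x y : T) : T := op y (op y x).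

Definition bck_commutative (T : Type) (op : T -> T -> T) : Prop :=
  forall x y, bmeet op x y = bmeet op y x.

Definition cd (T : finType) (op : T -> T -> T) : rat :=
  (#|[set p : T * T | bmeet op p.1 p.2 == bmeet op p.2 p.1]|%:R / (#|T| ^ 2)%:R)%R.

(* Concrete algebras on carriers that are initial segments of nat, 0 = 0. *)
Definition PIop (x y : nat) : nat :=
  if (x == 1) && (y == 0) then 1
  else if (x == 2) && (y == 0) then 2
  else if (x == 2) && (y == 1) then 2
  else 0.

Definition two_op (b : nat) (x y : nat) : nat :=
  if (x == b) && (y == 0) then b else 0.

(* BCK-union of an algebra with carrier {0,...,m-1} and the algebra 2 = {0,m} *)
Definition bck_union_two (opA : nat -> nat -> nat) (m : nat) (x y : nat) : nat :=
  if (x < m) && (y < m) then opA x y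
  else if ((x == 0) || (x == m)) && ((y == 0) || (y == m)) then two_op m x y
  else x.

(* B_n on {0,...,n-1}: B_3 = PI, B_n = B_(n-1) ⊔ 2 (new element n-1) for n > 3.
   (values for n < 3 are irrelevant) *)
Fixpoint Bop (n : nat) : nat -> nat -> nat :=
  match n with
  | 0 | 1 | 2 | 3 => PIop
  | n'.+1 => bck_union_two (Bop n') n'
  end.

(* B_(m+1) as an operation on 'I_(m+1) (inord only clips out-of-range values,
   which do not occur since B_n is closed on {0..n-1}) *)
Definition B_op (m : nat) (x y : 'I_m.+1) : 'I_m.+1 := inord (Bop m.+1 x y).

(* Main.v *)
Require Import Defs.
From mathcomp Require Import all_boot all_order all_algebra.
From mathcomp Require Import zify lra.
From Stdlib Require Import FunctionalExtensionality.
Import Order.TTheory GRing.Theory Num.Theory.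
Set Implicit Arguments. Unset Strict Implicit.

Section Gen.
Variables (T : eqType) (R : rel T) (z : T).
Hypotheses (Rrefl : forall x, R x x) (Rtrans : forall x y w, R x y -> R y w -> R x w)
  (Ranti : forall x y, R x y -> R y x -> x = y) (R0 : forall x, R z x).
Definition gop (x y : T) := if R x y then z else x.
Lemma Rzeq {x} : R x z -> x = z. Proof. by move=> h; apply: Ranti. Qed.
Lemma gop_x0 x : gop x z = x.
Proof. rewrite /gop; case: ifP => // /Rzeq ->. done. Qed.
Lemma gop_BCK : is_BCK gop z.
Proof.
split.
- move=> x y w; rewrite /gop.
  case: (boolP (R x y)) => Hxy; first by rewrite R0 ?R0.
  case: (boolP (R x w)) => Hxw; last by rewrite Rrefl R0.
  have Hwy : ~~ R w y by apply: contra Hxy; apply: Rtrans.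
  rewrite (negbTE Hwy).
  have Hxz : R x z = false.
    by apply/negP => /Rzeq Ex; rewrite Ex R0 in Hxy.
  by rewrite Hxz Hxw.
- move=> x y; case: (boolP (R x y)) => Hxy.
  + have e : gop x y = z by rewrite /gop Hxy.
    by rewrite e gop_x0 e.
  + have e : gop x y = x by rewrite /gop (negbTE Hxy).
    by rewrite e /gop Rrefl R0.
- by move=> x; rewrite /gop Rrefl.
- by move=> x; rewrite /gop R0.
- move=> x y; rewrite /gop.
  case: ifP => Hxy; case: ifP => Hyx //.
  + by move=> _ _; apply: Ranti.
  + by move=> _ E; rewrite E R0 in Hyx.
  + by move=> E _; rewrite E R0 in Hxy.
  + by move=> E _; rewrite E R0 in Hxy.
Qed.
Lemma gop_meet x y : bmeet gop x y = if R y x then y else z.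
Proof.
rewrite /bmeet {2}/gop; case: ifP => _; first by rewrite gop_x0.
by rewrite /gop Rrefl.
Qed.
End Gen.

Definition Rn (a b : nat) := (a==b)||(a==0)||((a==1)&&(b==2)).

Lemma Rn_trans a b c : Rn a b -> Rn b c -> Rn a c.
Proof. rewrite /Rn; lia. Qed.
Lemma Rn_anti a b : Rn a b -> Rn b a -> a = b.
Proof. rewrite /Rn; lia. Qed.

Lemma Bop_closed n : 3 <= n -> forall x y, x < n -> y < n ->
  Bop n x y = if Rn x y then 0 else x.
Proof.
elim: n => [//|n IH]; rewrite leq_eqVlt => /orP [/eqP <-|Hn].
- by move=> [|[|[|x]]] [|[|[|y]]].
- have -> : Bop n.+1 = bck_union_two (Bop n) n.
    by clear IH; case: n Hn => [|[|[|n]]].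
  move=> x y Hx Hy.
  rewrite /bck_union_two /two_op.
  case: ifP => [/andP [h1 h2]|h].
    by rewrite (IH Hn).
  rewrite /Rn; repeat (case: ifP => ?); lia.
Qed.

Section B.
Variable m : nat.
Hypothesis Hm : 3 <= m.+1.
Definition RB (x y : 'I_m.+1) := Rn x y.
Lemma B_op_gop x y : B_op x y = gop RB ord0 x y.
Proof.
rewrite /B_op /gop /RB Bop_closed //; case: ifP => _.
- by apply: val_inj; rewrite /= inordK.
- by rewrite inord_val.
Qed.
Lemma RB_refl x : RB x x. Proof. by rewrite /RB /Rn eqxx. Qed.
Lemma RB_trans x y w : RB x y -> RB y w -> RB x w.
Proof. exact: Rn_trans. Qed.
Lemma RB_anti x y : RB x y -> RB y x -> x = y.
Proof. move=> h1 h2; apply: val_inj; exact: Rn_anti h1 h2. Qed.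
Lemma RB_0 x : RB ord0 x. Proof. by rewrite /RB /Rn /= orbT. Qed.

Lemma B_eq : @B_op m = gop RB ord0.
Proof. by apply: functional_extensionality => x; apply: functional_extensionality => y; apply: B_op_gop. Qed.
End B.

Lemma meet_nat a b : ((if Rn b a then b else 0) == (if Rn a b then a else 0))
   = ~~ (((a==1)&&(b==2)) || ((a==2)&&(b==1))).
Proof. rewrite /Rn; case: ifP; case: ifP; lia. Qed.

Lemma val_if (n : nat) (b : bool) (a c : 'I_n) : val (if b then a else c) = if b then val a else val c.
Proof. by case: b. Qed.

Lemma part1 (T : finType) (op : T -> T -> T) (z : T) :
      is_BCK op z -> ~ bck_commutative op ->
      (cd op <= ((#|T| ^ 2)%:R - 2) / (#|T| ^ 2)%:R)%R.
Proof.
move=> _ Hnc.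
have : ~~ [forall p : (T * T)%type, bmeet op p.1 p.2 == bmeet op p.2 p.1].
  apply/negP => /forallP h; apply: Hnc => x y; exact: (eqP (h (x, y))).
case/forallPn => [[x y]] /= Hne.
have Hxy : (x, y) != (y, x).
  apply: contra Hne => /eqP [->]; by [].
pose S := [set p : T * T | bmeet op p.1 p.2 == bmeet op p.2 p.1].
have sub : S \subset ~: [set (x, y); (y, x)].
  apply/subsetP => p; rewrite !inE => Hp; apply/negP => /orP [] /eqP E;
    move: Hp; rewrite E /=; first by rewrite (negbTE Hne).
  by rewrite eq_sym (negbTE Hne).
have cS : #|S| <= #|T| ^ 2 - 2.
  apply: (leq_trans (subset_leq_card sub)).
  have := cardsC [set (x, y); (y, x)]; rewrite cards2 Hxy card_prod mulnn.
  move=> <-; by rewrite addKn.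
have n2 : 2 <= #|T| ^ 2.
  have := cardsC [set (x, y); (y, x)]; rewrite cards2 Hxy card_prod mulnn.
  move=> <-; exact: leq_addr.
rewrite /cd -/S; apply: ler_wpM2r; first by rewrite invr_ge0 ler0n.
by rewrite -(natrB _ n2) ler_nat.
Qed.

Lemma part2 (m : nat) : 3 <= m.+1 ->
      is_BCK (@B_op m) ord0 /\ ~ bck_commutative (@B_op m) /\
      #|'I_m.+1| = m.+1 /\
      cd (@B_op m) = (((m.+1 ^ 2)%:R - 2) / (m.+1 ^ 2)%:R)%R.
Proof.
move=> Hm; rewrite (B_eq Hm).
have h1 : 1 < m.+1 by lia. have h2 : 2 < m.+1 by lia.
have rf := @RB_refl m; have tr := @RB_trans m; have an := @RB_anti m; have r0 := @RB_0 m.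
split; first exact: gop_BCK.
split.
  move=> H; have := H (inord 1) (inord 2).
  rewrite !gop_meet // /RB /Rn !inordK //= => /(congr1 val) /=; rewrite inordK //.
split; first exact: card_ord.
set i1 : 'I_m.+1 := inord 1; set i2 : 'I_m.+1 := inord 2.
have E : [set p : 'I_m.+1 * 'I_m.+1 | bmeet (gop (@RB m) ord0) p.1 p.2 == bmeet (gop (@RB m) ord0) p.2 p.1]
   = ~: [set (i1, i2); (i2, i1)].
  apply/setP => -[x y]; rewrite !inE /= !gop_meet // -val_eqE !val_if /=.
  rewrite /RB meet_nat !xpair_eqE -!val_eqE /i1 /i2 /= !inordK //.
have Hd : (i1, i2) != (i2, i1).
  by rewrite xpair_eqE -val_eqE /i1 /i2 /= !inordK.
have := cardsC [set (i1, i2); (i2, i1)]; rewrite cards2 Hd card_prod card_ord mulnn => C.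
have n2 : 2 <= m.+1 ^ 2 by rewrite -C leq_addr.
rewrite /cd E card_ord -(natrB _ n2) -C addKn.
by [].
Qed.

Theorem theorem5p3 :
  (* upper bound for every finite non-commutative BCK-algebra of order n = #|T| *)
  (forall (T : finType) (op : T -> T -> T) (z : T),
      is_BCK op z -> ~ bck_commutative op ->
      (cd op <= ((#|T| ^ 2)%:R - 2) / (#|T| ^ 2)%:R)%R)
  /\
  (* the bound is attained by B_n, n = m+1 >= 3 *)
  (forall m : nat, 3 <= m.+1 ->
      is_BCK (@B_op m) ord0 /\ ~ bck_commutative (@B_op m) /\
      #|'I_m.+1| = m.+1 /\
      cd (@B_op m) = (((m.+1 ^ 2)%:R - 2) / (m.+1 ^ 2)%:R)%R)
  /\
  (* no finite satisfiability gap for x /\ y = y /\ x among BCK-algebras *)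
  (forall eps : rat, (0 < eps)%R ->
      exists (T : finType) (op : T -> T -> T) (z : T),
        is_BCK op z /\ (1 - eps < cd op)%R /\ (cd op < 1)%R).
Proof.
split; first exact: part1.
split; first exact: part2.
move=> eps eps0.
set k := Num.Def.archi_bound (2 / eps).
have Hk : (2 / eps < k%:R)%R by apply: archi_boundP; rewrite divr_ge0 // ltW.
have [HB [_ [_ Hcd]]] := part2 (isT : 3 <= k.+3).
exists 'I_k.+3, (@B_op k.+2), ord0.
split; first exact: HB.
rewrite Hcd.
have kN : (k%:R <= ((k.+3 ^ 2)%:R : rat))%R by rewrite ler_nat; lia.
set N := ((k.+3 ^ 2)%:R : rat) in kN *.
have N0 : (0 < N)%R by rewrite /N ltr0n expn_gt0.
have h2 : (2 < N * eps)%R.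
  by rewrite -ltr_pdivrMr //; apply: lt_le_trans kN.
split.
- rewrite ltr_pdivlMr // mulrBl mul1r; lra.
- rewrite ltr_pdivrMr // mul1r; lra.
Qed.
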